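(* Let $p>2$ be prime, $n\ge1$, $H_n=Sp_{2n}(p)$, and let $s\in H_n$ be an element of order $p^n+1$ such that the cyclic group $\langle s\rangle$ acts irreducibly on the natural module $\mathbb F_p^{2n}$ (such elements exist). Let $\theta_n^1,\theta_n^2$ be the irreducible constituents, of degrees $(p^n-1)/2$ and $(p^n+1)/2$, of a Weil representation of $H_n$. Then for $i=1,2$ every eigenvalue of the matrix $\theta_n^i(s)$ has multiplicity $1$.
   Context: Weil representation: let $A\subset GL(p^n,\mathbb C)$ be an irreducible subgroup containing the group $Z$ of all scalar matrices with $A/Z$ abelian of exponent $p$, and $N$ its normalizer in $GL(p^n,\mathbb C)$; then $N/A\cong Sp_{2n}(p)$ and, for $p>2$, $N$ splits over $A$, giving a representation of $Sp_{2n}(p)$ of degree $p^n$ (a Weil representation) with exactly two irreducible constituents, of degrees $(p^n-1)/2$ and $(p^n+1)/2$. *)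

(* Defs.v *)
From HB Require Import structures.
From mathcomp Require Import all_boot all_order all_algebra all_fingroup all_solvable all_field all_character.
Set Implicit Arguments. Unset Strict Implicit. Unset Printing Implicit Defensive.
Import GRing.Theory Num.Theory.
Local Open Scope ring_scope.

(* Matrices in {'GL_(2*n)[F]} have size (2*n).-1.+1, which equals 2*n for n >= 1. *)
Notation dim2 n := (2 * n)%N.-1.+1.

(* Standard symplectic Gram matrix J = [[0, I_n], [-I_n, 0]] on F^(2n),
   coordinates 0..n-1 and n..2n-1. *)
Definition sympJ (F : fieldType) (n : nat) : 'M[F]_(dim2 n) :=
  \matrix_(i, j)
    (if ((i < n)%N && (j == n + i :> nat)) then 1
     else if ((j < n)%N && (i == n + j :> nat)) then -1 else 0).

Definition sympf (F : fieldType) (n : nat) (v w : 'rV[F]_(dim2 n)) : F :=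
  (v *m sympJ F n *m w^T) 0 0.

Definition Sp_set (F : finFieldType) (n : nat) : {set {'GL_(2 * n)[F]}} :=
  [set g : {'GL_(2 * n)[F]} | GLval g *m sympJ F n *m (GLval g)^T == sympJ F n].

Lemma Sp_group_set (F : finFieldType) (n : nat) : group_set (Sp_set F n).
Proof.
apply/group_setP; split=> [|x y]; first by rewrite inE GL_1E mul1mx trmx1 mulmx1.
rewrite !inE GL_MxE => /eqP Hx /eqP Hy; apply/eqP.
by rewrite trmx_mul !mulmxA -(mulmxA _ (GLval y)) -(mulmxA _ (GLval y *m _)) Hy Hx.
Qed.

(* The symplectic group Sp_{2n}(F) acting on row vectors on the right. *)
Canonical Sp_group (F : finFieldType) (n : nat) := Group (Sp_group_set F n).
Notation Sp F n := (Sp_group F n).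

(* Weil representation of Sp_{2n}(p) of degree p^n (over algC), following the
   normalizer construction: there is a subgroup A = {c * T v | c <> 0, v in F_p^(2n)}
   of GL(p^n, C) containing the scalars, with A/Z = F_p^(2n) (abelian of exponent p),
   commutator pairing eps^omega(v,w) (eps a primitive p-th root of unity), and W(g)
   normalizes A inducing g on A/Z.  W(Sp) is then a complement to A in N(A)
   mapping isomorphically onto N/A = Sp_{2n}(p). *)
Definition weil_rep (p n : nat) (W : mx_representation algC (Sp 'F_p n) (p ^ n)) : Prop :=
  exists (T : 'rV['F_p]_(dim2 n) -> 'M[algC]_(p ^ n)) (eps : algC),
    [/\ p.-primitive_root eps,
        forall v, T v \in unitmx,
        forall v w, exists c : algC, T v *m T w = c *: T (v + w),
        forall v w, T v *m T w = eps ^+ (sympf v w : 'F_p) *: (T w *m T v)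
      & forall g v, g \in Sp 'F_p n ->
          exists c : algC, invmx (W g) *m T v *m W g = c *: T (v *m GLval g)].

Definition nat_repr_cyc (F : finFieldType) (n : nat) (s : {'GL_(2 * n)[F]}) :=
  subg_repr (GLrepr F (2 * n).-1) (subsetT <[s]>%g).

(* Main.v *)
Require Import Defs.
From HB Require Import structures.
From mathcomp Require Import all_boot all_order all_algebra all_fingroup all_solvable all_field all_character.
From mathcomp Require Import zify.
Set Implicit Arguments. Unset Strict Implicit. Unset Printing Implicit Defensive.
Import GRing.Theory Num.Theory.
Local Open Scope ring_scope.

Lemma geom_sum (r : algC) (M : nat) : r ^+ M = 1 ->
  \sum_(k < M) r ^+ k = if r == 1 then M%:R else 0.
Proof.
move=> rM; case: eqP => [->|/eqP r1].
  by rewrite (eq_bigr (fun _ => 1)) ?sumr_const ?card_ord // => k _; rewrite expr1n.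
have := subrX1 r M; rewrite rM subrr => /esym/eqP; rewrite mulf_eq0 subr_eq0 (negbTE r1).
by move/eqP.
Qed.

Lemma diag_exp m (d : 'rV[algC]_m) k :
  diag_mx d ^+ k = diag_mx (\row_j d 0 j ^+ k).
Proof.
elim: k => [|k IH].
  by apply/matrixP => i j; rewrite !mxE expr0.
rewrite exprS IH -mulmxE mul_diag_mx; apply/matrixP => i j; rewrite !mxE.
by case: eqP => [->|]; rewrite ?exprS ?mulr0 ?mulr1n.
Qed.

Lemma char_poly_conj m (P D : 'M[algC]_m) : P \in unitmx ->
  char_poly (invmx P *m D *m P) = char_poly D.
Proof.
move=> Pu; rewrite /char_poly /char_poly_mx.
have -> : 'X%:M - map_mx polyC (invmx P *m D *m P) =
   map_mx polyC (invmx P) *m ('X%:M - map_mx polyC D) *m map_mx polyC P.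
  rewrite mulmxBr mulmxBl !map_mxM; congr (_ - _).
  rewrite scalar_mxC -mulmxA -map_mxM mulVmx // map_mx1 mulmx1 //.
rewrite !det_mulmx mulrC mulrA -det_mulmx -map_mxM mulmxV // map_mx1 det1 mul1r //.
Qed.

Lemma mup_prod m (d : 'I_m -> algC) lam :
  mup lam (\prod_j ('X - (d j)%:P)) = (\sum_j (d j == lam))%N.
Proof.
have [] : mup lam (\prod_j ('X - (d j)%:P)) = (\sum_j (d j == lam))%N /\
          \prod_j ('X - (d j)%:P) != 0; last by [].
apply: (big_rec2 (fun (a : nat) (b : {poly algC}) => mup lam b = a /\ b != 0)).
  by rewrite mupNroot ?root1 // oner_neq0.
move=> i a b _ [h nz]; split; last by rewrite mulf_neq0 ?polyXsubC_eq0.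
rewrite mupM ?polyXsubC_eq0 // h -[X in mup _ X]expr1 mup_XsubCX.
by case: eqP.
Qed.

Lemma mult_formula m (d : 'I_m -> algC) M lam : (0 < M)%N -> (forall j, d j ^+ M = 1) ->
  lam ^+ M = 1 ->
  \sum_(k < M) (\sum_j d j ^+ k) * lam^-1 ^+ k = M%:R * (\sum_j (d j == lam))%N%:R.
Proof.
move=> M0 dM lM.
have l0 : lam != 0.
  apply/eqP => l0; move: lM; rewrite l0 expr0n; case: eqP => [M00|_]; first by rewrite M00 in M0.
  by move/eqP; rewrite eq_sym oner_eq0.
rewrite (eq_bigr (fun k : 'I_M => \sum_j (d j / lam) ^+ k)); last first.
  by move=> k _; rewrite mulr_suml; apply: eq_bigr => j _; rewrite exprMn.
rewrite exchange_big /= natr_sum mulr_sumr; apply: eq_bigr => j _.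
rewrite geom_sum; last by rewrite exprMn exprVn dM lM invr1 mulr1.
rewrite -(inj_eq (mulIf l0)) divfK // mul1r.
by case: eqP; rewrite ?mulr1 ?mulr0.
Qed.

Lemma distinct_eig m (d : 'I_m -> algC) :
  (forall j, d j ^+ m.+1 = 1) ->
  (forall k, (0 < k < m.+1)%N ->
     (\sum_j d j ^+ k) * (\sum_j d j ^+ (m.+1 - k)) = 1) ->
  forall lam, (\sum_j (d j == lam) <= 1)%N.
Proof.
move=> dM Htr.
pose c lam := (\sum_j (d j == lam))%N.
have d0 l : d l != 0.
  by apply/eqP => h; have := dM l; rewrite h expr0n /= => /eqP; rewrite eq_sym oner_eq0.
have key : (m.+1)%:R * (\sum_l c (d l))%N%:R = (m.+1)%:R * m%:R :> algC.
  rewrite natr_sum mulr_sumr.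
  rewrite (eq_bigr (fun l => \sum_(k < m.+1) (\sum_j d j ^+ k) * (d l)^-1 ^+ k));
    last by move=> l _; rewrite mult_formula.
  rewrite exchange_big /=.
  rewrite (eq_bigr (fun k : 'I_m.+1 => (\sum_j d j ^+ k) * (\sum_j d j ^+ (m.+1 - k))));
    last first.
    move=> k _; rewrite -mulr_sumr; congr (_ * _); apply: eq_bigr => l _.
    have h : d l ^+ (m.+1 - k) * d l ^+ k = 1 by rewrite -exprD subnK ?dM // ltnW.
    by rewrite exprVn -[LHS]mul1r -h mulfK // expf_neq0.
  rewrite big_ord_recl /= subn0.
  have -> : \sum_(i < m) (\sum_j d j ^+ lift ord0 i) * (\sum_j d j ^+ (m.+1 - lift ord0 i))
            = \sum_(i < m) 1.
    by apply: eq_bigr => i _; rewrite Htr //= /bump /= add1n ltnS ltn_ord.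
  have -> : \sum_(j < m) d j ^+ 0 = m%:R.
    by rewrite (eq_bigr (fun _ => 1)) ?sumr_const ?card_ord // => j _; rewrite expr0.
  have -> : \sum_(j < m) d j ^+ m.+1 = m%:R.
    by rewrite (eq_bigr (fun _ => 1)) ?sumr_const ?card_ord // => j _; rewrite dM.
  rewrite -natrM -natrD -natrM; congr (_%:R).
  by rewrite mulSn addnC.
have csum : (\sum_l c (d l))%N = m.
  apply/eqP; rewrite -(eqr_nat algC); apply/eqP.
  by apply: (mulfI _ key); rewrite pnatr_eq0.
have c1 l : (1 <= c (d l))%N.
  by rewrite /c (bigD1 l) //= eqxx.
have ceq l : c (d l) = 1%N.
  have : (\sum_l (c (d l) - 1) == 0)%N.
    have : (\sum_l (c (d l) - 1) + \sum_(l < m) 1 = \sum_l c (d l))%N.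
      by rewrite -big_split; apply: eq_bigr => i _ /=; rewrite subnK.
    rewrite csum sum1_card card_ord => h; apply/eqP; apply: (@addIn m).
    by rewrite add0n.
  rewrite sum_nat_eq0 => /forallP /(_ l) /=; rewrite subn_eq0 => h.
  by apply/eqP; rewrite eqn_leq h c1.
move=> lam; case: (pickP (fun j => d j == lam)) => [j /eqP <-|none].
  by rewrite -/(c (d j)) ceq.
by rewrite big1 // => j _; rewrite none.
Qed.

Lemma diag_data m (X : 'M[algC]_m) M : (0 < M)%N -> X ^+ M = 1 ->
  exists d : 'I_m -> algC, [/\ forall j, d j ^+ M = 1,
     forall k, \tr (X ^+ k) = \sum_j d j ^+ k &
     char_poly X = \prod_j ('X - (d j)%:P)].
Proof.
move=> M0 XM; case: m X XM => [|m] X XM.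
  exists (fun _ => 1); split=> [[]//|k|].
    by rewrite big_ord0 /mxtrace big_ord0.
  by rewrite big_ord0 /char_poly det_mx00.
have [z zP] := C_prim_root_exists M0.
have : diagonalizable X.
  apply/diagonalizableP; exists [seq z ^+ i | i <- iota 0 M].
    rewrite map_inj_in_uniq ?iota_uniq // => i j; rewrite !mem_iota !add0n => iM jM.
    move/eqP; rewrite (eq_prim_root_expr zP) => /eqP.
    by rewrite !modn_small.
  rewrite big_map.
  have -> : iota 0 M = index_iota 0 M by rewrite /index_iota subn0.
  rewrite (factor_Xn_sub_1 zP).
  apply: mxminpoly_min; rewrite rmorphB /= rmorphXn /= horner_mx_X horner_mx_C XM.
  by rewrite subrr.
case=> P Pu /(diagonalizable_forLR Pu) [D] XE.
have XE2 : X = invmx P *m diag_mx D *m P by rewrite XE mxpoly.conjVmx.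
clear XE; rename XE2 into XE.
have XkE k : X ^+ k = invmx P *m diag_mx D ^+ k *m P.
  elim: k => [|k IH]; first by rewrite !expr0 mulmx1 mulVmx.
  rewrite [X ^+ _]exprS [diag_mx D ^+ _]exprS IH {1}XE -!mulmxE -!mulmxA.
  by rewrite (mulmxA P) mulmxV // mul1mx.
exists (fun j => D 0 j); split.
- move=> j; have E := XkE M; rewrite XM in E.
  have : P *m (invmx P *m diag_mx D ^+ M *m P) *m invmx P = diag_mx D ^+ M.
    by rewrite mulmxA mulmxK // mulKVmx.
  rewrite -E mulmx1 mulmxV // diag_exp.
  by move/matrixP/(_ j j); rewrite !mxE eqxx mulr1n.
- move=> k; rewrite XkE mxtrace_mulC mulmxA mulmxV // mul1mx diag_exp mxtrace_diag.
  by apply: eq_bigr => j _; rewrite mxE.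
rewrite XE char_poly_conj // char_poly_trig ?diag_mx_is_trig //.
by apply: eq_bigr => j _; rewrite mxE eqxx mulr1n.
Qed.

Lemma repr_pow (gT : finGroupType) (G : {group gT}) n
  (rG : mx_representation algC G n) x k : x \in G -> rG (x ^+ k)%g = rG x ^+ k.
Proof.
move=> Gx; elim: k => [|k IH]; first by rewrite expg0 repr_mx1 expr0.
by rewrite expgS repr_mxM ?groupX // IH exprS mulmxE.
Qed.

Lemma constituent_bound (gT : finGroupType) (G : {group gT}) N
  (W : mx_representation algC G N) (i : Iirr G) (s : gT) M :
  s \in G -> (0 < M)%N -> (s ^+ M)%g = 1%g -> i \in irr_constt (cfRepr W) ->
  (forall lam, mup lam (char_poly (W s)) <= 1)%N ->
  forall lam, root (char_poly ('Chi_i s)) lam -> mup lam (char_poly ('Chi_i s)) = 1%N.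
Proof.
move=> Gs M0 sM iW Wb lam rlam.
have [chi' Nchi' Wdec] := constt_charP i (cfRepr_char W) iW.
have [R Rdef] := char_reprP Nchi'.
have powM n (rG : mx_representation algC G n) : rG s ^+ M = 1.
  by rewrite -repr_pow // sM repr_mx1.
have [dW [dWM trW cpW]] := diag_data M0 (powM _ W).
have [dY [dYM trY cpY]] := diag_data M0 (powM _ 'Chi_i).
have [dZ [dZM trZ cpZ]] := diag_data M0 (powM _ R).
have trE k : \tr (W s ^+ k) = \tr ('Chi_i s ^+ k) + \tr (R s ^+ k).
  have := congr1 (fun f : 'CF(G) => f (s ^+ k)%g) Wdec => /=.
  rewrite Rdef cfunE -irrRepr !cfunE !groupX // !mulr1n !repr_pow //.
have cY1 : (1 <= \sum_j (dY j == lam))%N.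
  rewrite -mup_prod -cpY mup_geq ?expr1 ?dvdp_XsubCl //.
  by rewrite -size_poly_eq0 size_char_poly.
have [j0 /eqP dj0] : exists j, dY j == lam.
  apply/existsP; apply: contraLR cY1 => /existsPn h.
  by rewrite -ltnNge ltnS leqn0 sum_nat_eq0; apply/forallP => j; rewrite eqb0 h.
have lM : lam ^+ M = 1 by rewrite -dj0 dYM.
have fW := mult_formula M0 dWM lM.
have fY := mult_formula M0 dYM lM.
have fZ := mult_formula M0 dZM lM.
have : (M%:R * (\sum_j (dW j == lam))%N%:R : algC) =
        M%:R * (\sum_j (dY j == lam) + \sum_j (dZ j == lam))%N%:R.
  rewrite -fW natrD mulrDr -fY -fZ -big_split /=; apply: eq_bigr => k _.
  by rewrite -trW trE trY trZ mulrDl.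
move/(mulfI _); rewrite pnatr_eq0 -lt0n M0 => /(_ isT) /eqP; rewrite eqr_nat => /eqP cWE.
have := Wb lam; rewrite cpW mup_prod cWE cpY mup_prod => h.
by apply/eqP; rewrite eqn_leq cY1 andbT; apply: leq_trans h; apply: leq_addr.
Qed.

Lemma invmx_mulmx N (A B : 'M[algC]_N) : A \in unitmx -> B \in unitmx ->
  invmx (A *m B) = invmx B *m invmx A.
Proof.
move=> Au Bu; have ABu : A *m B \in unitmx by rewrite unitmx_mul Au Bu.
have H : A *m B *m (invmx B *m invmx A) = 1%:M.
  by rewrite mulmxA mulmxK // mulmxV.
by rewrite -[LHS]mulmx1 -H mulmxA mulVmx // mul1mx.
Qed.

Lemma comm_scalar N (Z : 'M[algC]_N.+1) :
  (forall Y, Z *m Y = Y *m Z) -> Z = (Z 0 0)%:M.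
Proof.
move=> HZ; apply/matrixP => a b.
have E i j a' b' : (Z *m delta_mx i j) a' b' = (delta_mx i j *m Z) a' b'.
  by rewrite HZ.
have L i j a' b' : (Z *m delta_mx i j) a' b' = Z a' i * (j == b')%:R.
  rewrite mxE (bigD1 i) // big1 /=.
    by rewrite addr0 mxE eqxx /= eq_sym.
  by move=> k /negbTE ki; rewrite mxE ki mulr0.
have R i j a' b' : (delta_mx i j *m Z) a' b' = (a' == i)%:R * Z j b'.
  rewrite mxE (bigD1 j) // big1 /=.
    by rewrite addr0 mxE eqxx andbT.
  by move=> k /negbTE kj; rewrite mxE kj andbF mul0r.
rewrite mxE; case: (eqVneq a b) => [<-|ab].
  have := E 0 a 0 a; rewrite L R !eqxx mulr1 mul1r => <-.
  by rewrite mulr1n.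
have := E b b a b; rewrite L R eqxx (negbTE ab) mulr1 mul0r => ->.
by rewrite mulr0n.
Qed.


Lemma c_neq0 N (A B C : 'M[algC]_N.+1) c : A \in unitmx -> B \in unitmx ->
  A *m B = c *: C -> c != 0.
Proof.
move=> Au Bu E; apply/eqP => c0.
have : A *m B \in unitmx by rewrite unitmx_mul Au Bu.
by rewrite E c0 scale0r unitmxE det0 unitr0.
Qed.

Lemma T_orth N (V : finZmodType) (T : V -> 'M[algC]_N.+1)
  (Tu : forall v, T v \in unitmx)
  (TM : forall v w, exists c, T v *m T w = c *: T (v + w))
  (Ttr : forall v, v != 0 -> \tr (T v) = 0) u v :
  \tr (invmx (T v) *m T u) = if u == v then N.+1%:R else 0.
Proof.
case: eqP => [->|/eqP uv]; first by rewrite mulVmx // mxtrace1.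
have [c Hc] := TM v (u - v).
have c0 := c_neq0 (Tu _) (Tu _) Hc.
rewrite [v + _]addrC subrK in Hc.
have -> : T u = c^-1 *: (T v *m T (u - v)) by rewrite Hc scalerA mulVf // scale1r.
by rewrite -scalemxAr mulKmx // mxtraceZ Ttr ?mulr0 // subr_eq0.
Qed.

Lemma T_span N (V : finZmodType) (T : V -> 'M[algC]_N.+1)
  (Tu : forall v, T v \in unitmx)
  (TM : forall v w, exists c, T v *m T w = c *: T (v + w))
  (Ttr : forall v, v != 0 -> \tr (T v) = 0)
  (card : #|V| = (N.+1 * N.+1)%N) (Z : 'M[algC]_N.+1) :
  (forall w, Z *m T w = T w *m Z) -> forall Y, Z *m Y = Y *m Z.
Proof.
move=> HZ Y.
pose X := [tuple T (enum_val i) | i < #|V|].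
have XE (i : 'I_#|V|) : X`_i = T (enum_val i) by rewrite nth_mktuple.
have Xfree : free X.
  apply/freeP => k Hk i.
  have := congr1 (fun A => \tr (invmx (T (enum_val i)) *m A)) Hk.
  rewrite /= mulmx0 linear0 mulmx_sumr linear_sum /=.
  rewrite (bigD1 i) //= big1 ?addr0.
    rewrite XE -scalemxAr mxtraceZ (T_orth Tu TM Ttr) eqxx => /eqP.
    by rewrite mulf_eq0 pnatr_eq0 orbF => /eqP.
  move=> j ji; rewrite XE -scalemxAr mxtraceZ (T_orth Tu TM Ttr).
  by rewrite (inj_eq enum_val_inj) (negbTE ji) mulr0.
have spanX : (<<X>> = fullv)%VS.
  apply/eqP; rewrite eqEdim subvf /= dimvf.
  move/eqP: Xfree ->; rewrite size_tuple card.
  by rewrite dim_matrix.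
have YX : Y \in <<X>>%VS by rewrite spanX memvf.
rewrite (coord_span YX) mulmx_sumr mulmx_suml; apply: eq_bigr => i _.
by rewrite -scalemxAr -scalemxAl XE HZ.
Qed.

Lemma T0_scalar N (V : finZmodType) (T : V -> 'M[algC]_N.+1)
  (Tu : forall v, T v \in unitmx)
  (TM : forall v w, exists c, T v *m T w = c *: T (v + w)) :
  exists a, T 0 = a%:M.
Proof.
have [c Hc] := TM 0 0; rewrite addr0 in Hc; exists c.
by rewrite -[LHS](mulKmx (Tu 0)) Hc -scalemxAr mulVmx // scalemx1.
Qed.

Lemma T_sumconj N (V : finZmodType) (T : V -> 'M[algC]_N.+1)
  (Tu : forall v, T v \in unitmx)
  (TM : forall v w, exists c, T v *m T w = c *: T (v + w))
  (Ttr : forall v, v != 0 -> \tr (T v) = 0)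
  (card : #|V| = (N.+1 * N.+1)%N) (Y : 'M[algC]_N.+1) :
  \sum_v invmx (T v) *m Y *m T v = (N.+1%:R * \tr Y)%:M.
Proof.
set Z := \sum_v _.
have HZ w : Z *m T w = T w *m Z.
  have E : invmx (T w) *m Z *m T w = Z.
    rewrite /Z mulmx_sumr mulmx_suml [RHS](reindex_inj (addIr w)) /=.
    apply: eq_bigr => v _.
    have [c Hc] := TM v w; have c0 := c_neq0 (Tu _) (Tu _) Hc.
    have -> : T (v + w) = c^-1 *: (T v *m T w) by rewrite Hc scalerA mulVf // scale1r.
    rewrite invmxZ; last by rewrite Hc scalerA mulVf // scale1r Tu.
    rewrite invmx_mulmx // invrK -!scalemxAl -scalemxAr scalerA mulfV // scale1r.
    by rewrite !mulmxA.
  by rewrite -{2}E !mulmxA mulmxV // mul1mx.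
have ZE : Z = (Z 0 0)%:M by apply: comm_scalar; apply: (T_span Tu TM Ttr card).
have trZ : \tr Z = (N.+1 * N.+1)%:R * \tr Y.
  rewrite /Z linear_sum /= (eq_bigr (fun _ => \tr Y)); last first.
    by move=> v _; rewrite mxtrace_mulC mulmxA mulmxV // mul1mx.
  by rewrite sumr_const card mulr_natl.
rewrite ZE; congr (_%:M).
move: trZ; rewrite {1}ZE mxtrace_scalar => h.
have k : N.+1%:R != 0 :> algC by rewrite pnatr_eq0.
by apply: (mulIf k); rewrite mulr_natr h natrM mulrAC.
Qed.

Lemma heis_trace N (V : finZmodType) (T : V -> 'M[algC]_N.+1)
  (Tu : forall v, T v \in unitmx)
  (TM : forall v w, exists c, T v *m T w = c *: T (v + w))
  (Ttr : forall v, v != 0 -> \tr (T v) = 0)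
  (card : #|V| = (N.+1 * N.+1)%N) (X : 'M[algC]_N.+1) (f : V -> V) :
  X \in unitmx ->
  (forall v, exists c, invmx X *m T v *m X = c *: T (f v)) ->
  (forall v, f v = v -> v = 0) -> \tr X * \tr (invmx X) = 1.
Proof.
move=> Xu HX Hf.
have := congr1 (fun A => \tr (A *m X)) (T_sumconj Tu TM Ttr card (invmx X)).
rewrite /= mulmx_suml linear_sum /= (bigD1 0) //= big1; last first.
  move=> v v0; have [c Hc] := HX v.
  rewrite -!mulmxA (mulmxA (invmx X)) Hc -scalemxAr mxtraceZ (T_orth Tu TM Ttr).
  case: eqP => [/Hf v0'|_]; last by rewrite mulr0.
  by rewrite v0' eqxx in v0.
have [a Ta] := T0_scalar Tu TM.
have -> : invmx (T 0) *m invmx X *m T 0 *m X = 1%:M.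
  have a0 : a != 0.
    apply/eqP => a0; have := Tu 0; rewrite Ta a0 unitmxE.
    by rewrite -scalemx1 scale0r det0 unitr0.
  rewrite Ta invmx_scalar scalar_mxC !mul_scalar_mx -!scalemxAl scalerA mulfV //.
  by rewrite scale1r mulVmx.
rewrite addr0 mxtrace1 mul_scalar_mx mxtraceZ.
move/eqP; rewrite -[X in X == _]mulr1 -mulrA (inj_eq (mulfI _)) ?pnatr_eq0 //.
by move/eqP => ->; rewrite mulrC.
Qed.

Lemma sympf_row (F : fieldType) n (i : 'I_(dim2 n)) (v : 'rV[F]_(dim2 n)) :
  sympf (delta_mx 0 i) v = \sum_k sympJ F n i k * v 0 k.
Proof.
rewrite /sympf -rowE mxE; apply: eq_bigr => k _; by rewrite !mxE.
Qed.

Lemma symp_nondeg (F : fieldType) n (v : 'rV[F]_(dim2 n)) : (0 < n)%N ->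
  v != 0 -> exists w, sympf w v != 0.
Proof.
move=> n0 v0.
have [j vj] : exists j, v 0 j != 0.
  apply/existsP; apply: contraR v0 => /existsPn h; apply/eqP/rowP => j.
  by rewrite mxE; apply/eqP; rewrite -[_ == _]negbK h.
have d2 : dim2 n = (2 * n)%N by rewrite prednK // muln_gt0.
case: (ltnP j n) => jn.
  have ilt : (n + j < (2 * n).-1.+1)%N.
    have := ltn_ord j; lia.
  exists (delta_mx 0 (inord (n + j))); rewrite sympf_row (bigD1 j) //= big1.
    rewrite addr0 mxE inordK // ltnNge leq_addr /= jn eqxx /= mulN1r oppr_eq0 //.
  move=> k kj; rewrite mxE inordK // ltnNge leq_addr /=.
  have -> : (n + j == n + k)%N = false by rewrite eqn_add2l eq_sym; exact: negbTE kj.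
  by rewrite andbF mul0r.
have jlt : (j - n < n)%N.
  have := ltn_ord j; lia.
have ilt : (j - n < (2 * n).-1.+1)%N by have := ltn_ord j; lia.
exists (delta_mx 0 (inord (j - n))); rewrite sympf_row (bigD1 j) //= big1.
  rewrite addr0 mxE inordK //.
  case: ifP => [_|/negbT h]; first by rewrite mul1r.
  by exfalso; move: h; have := ltn_ord j; lia.
move=> k kj; rewrite mxE inordK //.
have kj' : (k != j :> nat) by [].
case: ifP => [h|_].
  by exfalso; move: h kj'; lia.
case: ifP => [h|_]; last by rewrite mul0r.
by exfalso; move: h; lia.
Qed.

Lemma T_tr0 p n N (T : 'rV['F_p]_(dim2 n) -> 'M[algC]_N) (eps : algC) :
  prime p -> (0 < n)%N -> p.-primitive_root eps ->
  (forall v, T v \in unitmx) ->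
  (forall v w, T v *m T w = eps ^+ (sympf v w : 'F_p) *: (T w *m T v)) ->
  forall v, v != 0 -> \tr (T v) = 0.
Proof.
move=> pp n0 epsP Tu TC v v0.
have [w hw] := symp_nondeg n0 v0.
set a := sympf w v in hw.
have e1 : eps ^+ a != 1.
  rewrite -(prim_order_dvd epsP) gtnNdvd //.
    by rewrite lt0n; apply: contra hw => /eqP h; apply/eqP/val_inj.
  by have := ltn_ord a; have := Fp_cast pp; lia.
have E : \tr (T v) = eps ^+ a * \tr (T v).
  rewrite -{1}(mulKmx (Tu w) (T v)) TC -scalemxAr mxtraceZ mxtrace_mulC.
  by rewrite mulmxK.
apply/eqP; move/eqP: E; rewrite -subr_eq0 -{1}[\tr (T v)]mul1r -mulrBl mulf_eq0.
by rewrite subr_eq0 eq_sym (negbTE e1).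
Qed.

Lemma fpf (F : finFieldType) n (s : {'GL_(2 * n)[F]}) k :
  mx_irreducible (nat_repr_cyc s) -> (s ^+ k != 1)%g ->
  forall v : 'rV[F]_(dim2 n), v *m GLval (s ^+ k)%g = v -> v = 0.
Proof.
move=> [_ _ simp] sk v hv.
set A := GLval (s ^+ k)%g - 1%:M.
have modU : mxmodule (nat_repr_cyc s) (kermx A).
  apply/mxmoduleP => x /cycleP [j ->]; apply/sub_kermxP.
  have -> : (nat_repr_cyc s) (s ^+ j)%g = GLval (s ^+ j)%g by [].
  have cA : GLval (s ^+ j)%g *m A = A *m GLval (s ^+ j)%g.
    rewrite /A mulmxBr mulmxBl mulmx1 mul1mx -!GL_MxE -!expgD addnC //.
  by rewrite -mulmxA cA mulmxA mulmx_ker mul0mx.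
have vU : (v <= kermx A)%MS by apply/sub_kermxP; rewrite /A mulmxBr hv mulmx1 subrr.
apply/eqP; apply/negPn/negP => v0.
have U0 : kermx A != 0.
  by apply: contraNneq v0 => U0; move: vU; rewrite U0 submx0.
have := simp _ modU (submx1 _) U0 => /sub_kermxP; rewrite mul1mx /A => /eqP.
rewrite subr_eq0 => /eqP h; move/eqP: sk; apply; apply: val_inj.
by rewrite /= h.
Qed.

Lemma heis_trace' N (V : finZmodType) (T : V -> 'M[algC]_N)
  (N0 : (0 < N)%N)
  (Tu : forall v, T v \in unitmx)
  (TM : forall v w, exists c, T v *m T w = c *: T (v + w))
  (Ttr : forall v, v != 0 -> \tr (T v) = 0)
  (card : #|V| = (N * N)%N) (X : 'M[algC]_N) (f : V -> V) :
  X \in unitmx ->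
  (forall v, exists c, invmx X *m T v *m X = c *: T (f v)) ->
  (forall v, f v = v -> v = 0) -> \tr X * \tr (invmx X) = 1.
Proof.
case: N N0 T X Tu TM Ttr card => [//|N] _ T X Tu TM Ttr card.
exact: heis_trace.
Qed.

Lemma invmx_pow N (X : 'M[algC]_N) M k : X ^+ M = 1 -> (k <= M)%N ->
  invmx (X ^+ k) = X ^+ (M - k).
Proof.
move=> XM kM.
have h : X ^+ k *m X ^+ (M - k) = 1%:M by rewrite mulmxE -exprD subnKC.
have [u _] := mulmx1_unit h.
by rewrite -[RHS](mulKmx u) h mulmx1.
Qed.

Theorem lemma2 (p n : nat) (W : mx_representation algC (Sp 'F_p n) (p ^ n))
    (s : {'GL_(2 * n)['F_p]}) :
  prime p -> (2 < p)%N -> (0 < n)%N ->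
  weil_rep W ->
  s \in Sp 'F_p n -> #[s]%g = (p ^ n).+1 ->
  mx_irreducible (nat_repr_cyc s) ->
  forall i : Iirr (Sp 'F_p n), i \in irr_constt (cfRepr W) ->
  forall lam : algC, root (char_poly ('Chi_i s)) lam ->
    mup lam (char_poly ('Chi_i s)) = 1%N.
Proof.
move=> pp p2 n0 [T [eps [epsP Tu TM TC HW]]] Ss os irr i iW.
have N0 : (0 < p ^ n)%N by rewrite expn_gt0 prime_gt0.
have card : #|'rV['F_p]_(dim2 n)| = (p ^ n * p ^ n)%N.
  rewrite card_mx card_Fp // -expnD mul1n prednK ?muln_gt0 //.
  by rewrite addnn mul2n.
have Ttr := T_tr0 pp n0 epsP Tu TC.
have sM : (s ^+ (p ^ n).+1)%g = 1%g by rewrite -os expg_order.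
apply: (constituent_bound Ss (ltn0Sn _) sM iW) => lam0.
set X := W s.
have XM : X ^+ (p ^ n).+1 = 1 by rewrite -repr_pow // sM repr_mx1.
have [d [dM trd cpd]] := diag_data (ltn0Sn _) XM.
rewrite cpd mup_prod; apply: distinct_eig => // k /andP [k0 kM].
rewrite -(trd k) -(trd ((p ^ n).+1 - k)%N).
rewrite -(invmx_pow XM); last exact: ltnW.
rewrite -repr_pow //.
have Sg : (s ^+ k)%g \in Sp 'F_p n by rewrite groupX.
apply: (heis_trace' N0 Tu TM Ttr card (f := fun v => v *m GLval (s ^+ k)%g)).
- exact: repr_mx_unit.
- by move=> v; apply: HW.
apply: fpf irr _.
by rewrite -order_dvdn os gtnNdvd.
Qed.
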